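(* Suppose $\mathcal{G}_k$ is bidirectional for every $k$ and $\{\mathcal{G}_k\}$ is infinitely jointly connected. Consider an algorithm in $\mathcal{A}_{\rm ave}$ for which there is a constant $\alpha_*\in(0,1)$ such that either $\alpha_k\ge\alpha_*$ for all $k$, or $1-\alpha_k-\eta_k\ge\alpha_*$ for all $k$. Then the algorithm achieves global asymptotic consensus.
   Context: Network of nodes $\mathcal{V}=\{1,\dots,n\}$, $n\ge 3$, discrete time, states $x_i(k)\in\mathbb{R}$. At each time $k$ a digraph $\mathcal{G}_k=(\mathcal{V},\mathcal{E}_k)$ is given; $j$ is a neighbor of $i$ at time $k$ if $(j,i)\in\mathcal{E}_k$, every node is always its own neighbor; $\mathcal{N}_i(k)$ is the neighbor set. The algorithm is $$x_i(k+1)=\eta_k x_i(k)+\alpha_k\min_{j\in\mathcal{N}_i(k)}x_j(k)+(1-\eta_k-\alpha_k)\max_{j\in\mathcal{N}_i(k)}x_j(k),$$ with node-independent parameters; $\mathcal{A}_{\rm ave}$ consists of those with $\eta_k\in(0,1]$, $\alpha_k\in[0,1-\eta_k]$ for all $k$. Global asymptotic consensus: for every initial time $k_0\ge0$ and initial value $x(k_0)=x^0\in\mathbb{R}^n$ there is $z_*$ with $x_i(k)\to z_*$ for all $i$. A digraph is bidirectional if $(i,j)\in\mathcal{E}$ iff $(j,i)\in\mathcal{E}$; a bidirectional graph is connected if there is a path between any two nodes. $\mathcal{G}([k,\infty))=(\mathcal{V},\cup_{s\ge k}\mathcal{E}_s)$. A sequence of bidirectional graphs is infinitely jointly connected if $\mathcal{G}([k,\infty))$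 is connected for all $k\ge0$. *)

(* Defs.v *)
From Stdlib Require Import Reals Lra Lia List Relations.
Open Scope R_scope.

(* Nodes are the naturals 0..n-1 (the paper's 1..n, shifted).
   A time-varying digraph is E : nat -> nat -> nat -> bool, where
   E k j i = true means (j,i) is an edge of G_k.  Edges involving nodes
   >= n are ignored everywhere. *)

(* min / max over the neighbour set N_i(k) = {i} ∪ {j < n | E k j i}.
   Node i is always its own neighbour; this is built in by starting the
   fold at x i. *)
Definition nbrs (n : nat) (E : nat -> nat -> nat -> bool) (k i : nat) : list nat :=
  filter (fun j => E k j i) (seq 0 n).

Definition nbr_min (n : nat) (E : nat -> nat -> nat -> bool) (k i : nat)
  (x : nat -> R) : R :=
  fold_right (fun j acc => Rmin (x j) acc) (x i) (nbrs n E k i).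

Definition nbr_max (n : nat) (E : nat -> nat -> nat -> bool) (k i : nat)
  (x : nat -> R) : R :=
  fold_right (fun j acc => Rmax (x j) acc) (x i) (nbrs n E k i).

Definition step (n : nat) (E : nat -> nat -> nat -> bool) (eta alpha : nat -> R)
  (k : nat) (x : nat -> R) : nat -> R :=
  fun i => eta k * x i + alpha k * nbr_min n E k i x
           + (1 - eta k - alpha k) * nbr_max n E k i x.

(* traj ... k0 x0 m = state x(k0 + m) when x(k0) = x0. *)
Fixpoint traj (n : nat) (E : nat -> nat -> nat -> bool) (eta alpha : nat -> R)
  (k0 : nat) (x0 : nat -> R) (m : nat) : nat -> R :=
  match m with
  | O => x0
  | S m' => step n E eta alpha (k0 + m') (traj n E eta alpha k0 x0 m')
  end.

Definition global_consensus (n : nat) (E : nat -> nat -> nat -> bool)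
  (eta alpha : nat -> R) : Prop :=
  forall (k0 : nat) (x0 : nat -> R), exists z : R,
    forall i, (i < n)%nat -> Un_cv (fun m => traj n E eta alpha k0 x0 m i) z.

Definition in_A_ave (eta alpha : nat -> R) : Prop :=
  forall k, 0 < eta k <= 1 /\ 0 <= alpha k <= 1 - eta k.

Definition bidirectional_seq (n : nat) (E : nat -> nat -> nat -> bool) : Prop :=
  forall k i j, (i < n)%nat -> (j < n)%nat -> E k i j = E k j i.

Definition union_edge (n : nat) (E : nat -> nat -> nat -> bool) (k : nat)
  (a b : nat) : Prop :=
  (a < n)%nat /\ (b < n)%nat /\ exists s, (k <= s)%nat /\ E s a b = true.

(* A bidirectional graph is connected: a path between any two nodes. *)
Definition inf_jointly_connected (n : nat) (E : nat -> nat -> nat -> bool) : Prop :=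
  forall k i j, (i < n)%nat -> (j < n)%nat ->
    clos_refl_trans nat (union_edge n E k) i j.

(* Main.v *)
Require Import Defs.
From Stdlib Require Import Reals.
From Stdlib Require Import Lra Lia List Relations Classical.
Open Scope R_scope.

Lemma pow_le_1 (p : R) (m : nat) : 0 <= p <= 1 -> p ^ m <= 1.
Proof.
  intros Hp. induction m as [|m IH]; simpl; [lra|].
  assert (0 <= p ^ m) by (apply pow_le; lra).
  replace 1 with (1*1) by ring. apply Rmult_le_compat; lra.
Qed.

Lemma pow_anti (p : R) (m k : nat) : 0 <= p <= 1 -> (m <= k)%nat -> p ^ k <= p ^ m.
Proof.
  intros Hp Hmk. induction Hmk as [|k Hk IH]; [lra|].
  simpl. assert (0 <= p ^ k) by (apply pow_le; lra).
  apply Rle_trans with (1 * p ^ k); [apply Rmult_le_compat_r; lra | lra].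
Qed.

Definition fmin (f : nat -> R) (d : R) (l : list nat) : R :=
  fold_right (fun j acc => Rmin (f j) acc) d l.
Definition fmax (f : nat -> R) (d : R) (l : list nat) : R :=
  fold_right (fun j acc => Rmax (f j) acc) d l.

Lemma fmin_prop f d l :
  fmin f d l <= d /\ (forall j, In j l -> fmin f d l <= f j) /\
  (fmin f d l = d \/ exists j, In j l /\ fmin f d l = f j).
Proof.
  induction l as [|h t IH]; simpl.
  - split; [lra|split; [tauto| left; reflexivity]].
  - destruct IH as [H1 [H2 H3]]. unfold fmin in *; simpl.
    set (v := fold_right (fun j acc => Rmin (f j) acc) d t) in *.
    split; [|split].
    + eapply Rle_trans; [apply Rmin_r| exact H1].
    + intros j [<-|Hj]; [apply Rmin_l|]. eapply Rle_trans; [apply Rmin_r|auto].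
    + unfold Rmin at 1 2; destruct (Rle_dec (f h) v).
      * right; exists h; auto.
      * destruct H3 as [H3|[j [Hj H3]]]; [left; auto| right; exists j; auto].
Qed.

Lemma fmax_prop f d l :
  d <= fmax f d l /\ (forall j, In j l -> f j <= fmax f d l) /\
  (fmax f d l = d \/ exists j, In j l /\ fmax f d l = f j).
Proof.
  induction l as [|h t IH]; simpl.
  - split; [lra|split; [tauto| left; reflexivity]].
  - destruct IH as [H1 [H2 H3]]. unfold fmax in *; simpl.
    set (v := fold_right (fun j acc => Rmax (f j) acc) d t) in *.
    split; [|split].
    + eapply Rle_trans; [exact H1|apply Rmax_r].
    + intros j [<-|Hj]; [apply Rmax_l|]. eapply Rle_trans; [apply H2; auto|apply Rmax_r].
    + unfold Rmax at 1 2; destruct (Rle_dec (f h) v).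
      * destruct H3 as [H3|[j [Hj H3]]]; [left; auto| right; exists j; auto].
      * right; exists h; auto.
Qed.

Lemma in_nbrs n E k i j : In j (nbrs n E k i) <-> (j < n)%nat /\ E k j i = true.
Proof.
  unfold nbrs. rewrite filter_In, in_seq. split; intros [H1 H2]; split; auto; lia.
Qed.

Lemma nmin_spec n E k i x :
  nbr_min n E k i x <= x i /\
  (forall j, (j < n)%nat -> E k j i = true -> nbr_min n E k i x <= x j) /\
  (nbr_min n E k i x = x i \/ exists j, (j < n)%nat /\ E k j i = true /\ nbr_min n E k i x = x j).
Proof.
  change (nbr_min n E k i x) with (fmin x (x i) (nbrs n E k i)).
  destruct (fmin_prop x (x i) (nbrs n E k i)) as [H1 [H2 H3]].
  split; [auto|split].
  - intros j Hj Ej. apply H2, in_nbrs; auto.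
  - destruct H3 as [H3|[j [Hj H3]]]; [left; auto|right; exists j].
    apply in_nbrs in Hj; tauto.
Qed.

Lemma nmax_spec n E k i x :
  x i <= nbr_max n E k i x /\
  (forall j, (j < n)%nat -> E k j i = true -> x j <= nbr_max n E k i x) /\
  (nbr_max n E k i x = x i \/ exists j, (j < n)%nat /\ E k j i = true /\ nbr_max n E k i x = x j).
Proof.
  change (nbr_max n E k i x) with (fmax x (x i) (nbrs n E k i)).
  destruct (fmax_prop x (x i) (nbrs n E k i)) as [H1 [H2 H3]].
  split; [auto|split].
  - intros j Hj Ej. apply H2, in_nbrs; auto.
  - destruct H3 as [H3|[j [Hj H3]]]; [left; auto|right; exists j].
    apply in_nbrs in Hj; tauto.
Qed.

Lemma step_ge_min n E eta alpha k x i :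
  0 < eta k -> 0 <= alpha k <= 1 - eta k ->
  nbr_min n E k i x <= step n E eta alpha k x i.
Proof.
  intros He Ha. unfold step.
  destruct (nmin_spec n E k i x) as [H1 _]. destruct (nmax_spec n E k i x) as [H2 _].
  set (mn := nbr_min n E k i x) in *. set (mx := nbr_max n E k i x) in *.
  assert (eta k * (x i - mn) >= 0) by (apply Rle_ge, Rmult_le_pos; lra).
  assert ((1 - eta k - alpha k) * (mx - mn) >= 0) by (apply Rle_ge, Rmult_le_pos; lra).
  nra.
Qed.

Lemma step_le_max n E eta alpha k x i :
  0 < eta k -> 0 <= alpha k <= 1 - eta k ->
  step n E eta alpha k x i <= nbr_max n E k i x.
Proof.
  intros He Ha. unfold step.
  destruct (nmin_spec n E k i x) as [H1 _]. destruct (nmax_spec n E k i x) as [H2 _].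
  set (mn := nbr_min n E k i x) in *. set (mx := nbr_max n E k i x) in *.
  assert (eta k * (mx - x i) >= 0) by (apply Rle_ge, Rmult_le_pos; lra).
  assert (alpha k * (mx - mn) >= 0) by (apply Rle_ge, Rmult_le_pos; lra).
  nra.
Qed.

Lemma step_le_mix n E eta alpha a k x i :
  0 < eta k -> 0 <= alpha k <= 1 - eta k -> alpha k >= a ->
  step n E eta alpha k x i <= (1 - a) * nbr_max n E k i x + a * nbr_min n E k i x.
Proof.
  intros He Ha Haa. unfold step.
  destruct (nmin_spec n E k i x) as [H1 _]. destruct (nmax_spec n E k i x) as [H2 _].
  set (mn := nbr_min n E k i x) in *. set (mx := nbr_max n E k i x) in *.
  assert (eta k * (mx - x i) >= 0) by (apply Rle_ge, Rmult_le_pos; lra).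
  assert ((alpha k - a) * (mx - mn) >= 0) by (apply Rle_ge, Rmult_le_pos; lra).
  nra.
Qed.
Definition gmax (n : nat) (y : nat -> R) : R := fmax y (y 0%nat) (seq 0 n).
Definition gmin (n : nat) (y : nat -> R) : R := fmin y (y 0%nat) (seq 0 n).

Lemma gmax_ub n y i : (i < n)%nat -> y i <= gmax n y.
Proof. intros Hi. destruct (fmax_prop y (y 0%nat) (seq 0 n)) as [_ [HH _]]. apply HH, in_seq; lia. Qed.

Lemma gmax_le n y B : (0 < n)%nat -> (forall i, (i < n)%nat -> y i <= B) -> gmax n y <= B.
Proof.
  intros Hn HB. destruct (fmax_prop y (y 0%nat) (seq 0 n)) as [_ [_ [H3|[j [Hj H3]]]]];
  unfold gmax; rewrite H3; apply HB; auto. apply in_seq in Hj; lia.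
Qed.

Lemma gmin_lb n y i : (i < n)%nat -> gmin n y <= y i.
Proof. intros Hi. destruct (fmin_prop y (y 0%nat) (seq 0 n)) as [_ [HH _]]. apply HH, in_seq; lia. Qed.

Lemma gmin_ge n y B : (0 < n)%nat -> (forall i, (i < n)%nat -> B <= y i) -> B <= gmin n y.
Proof.
  intros Hn HB. destruct (fmin_prop y (y 0%nat) (seq 0 n)) as [_ [_ [H3|[j [Hj H3]]]]];
  unfold gmin; rewrite H3; apply HB; auto. apply in_seq in Hj; lia.
Qed.

Lemma gmin_att n y : (0 < n)%nat -> exists i, (i < n)%nat /\ y i = gmin n y.
Proof.
  intros Hn. destruct (fmin_prop y (y 0%nat) (seq 0 n)) as [_ [_ [H3|[j [Hj H3]]]]].
  - exists 0%nat; split; auto.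
  - exists j; split; auto. apply in_seq in Hj; lia.
Qed.

Lemma filter_len_le (f g : nat -> bool) l :
  (forall i, In i l -> f i = true -> g i = true) ->
  (length (filter f l) <= length (filter g l))%nat.
Proof.
  induction l as [|h t IH]; simpl; intros H; auto.
  destruct (f h) eqn:Fh.
  - rewrite (H h (or_introl eq_refl) Fh). simpl. apply le_n_S, IH; auto.
  - destruct (g h); simpl; [apply le_S|]; apply IH; auto.
Qed.

Lemma filter_len_lt (f g : nat -> bool) l a :
  (forall i, In i l -> f i = true -> g i = true) -> In a l -> g a = true -> f a = false ->
  (length (filter f l) < length (filter g l))%nat.
Proof.
  induction l as [|h t IH]; simpl; intros H Ha Ga Fa; [contradiction|].
  destruct Ha as [<-|Ha].
  - rewrite Fa, Ga. simpl. apply le_n_S, filter_len_le; auto.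
  - destruct (f h) eqn:Fh.
    + rewrite (H h (or_introl eq_refl) Fh). simpl. apply le_n_S, IH; auto.
    + destruct (g h); simpl; [apply le_S|]; apply IH; auto.
Qed.

Definition cnt (n : nat) (y : nat -> R) (th : R) : nat :=
  length (filter (fun i => if Rlt_dec th (y i) then true else false) (seq 0 n)).

Lemma cnt_le_n n y th : (cnt n y th <= n)%nat.
Proof.
  unfold cnt. rewrite <- (length_seq n 0) at 2.
  generalize (seq 0 n). intros l. induction l; simpl; auto.
  destruct (Rlt_dec th (y a)); simpl; lia.
Qed.

Lemma cnt_mono n y1 th1 y2 th2 :
  (forall i, (i < n)%nat -> th2 < y2 i -> th1 < y1 i) -> (cnt n y2 th2 <= cnt n y1 th1)%nat.
Proof.
  intros H. apply filter_len_le. intros i Hi. apply in_seq in Hi.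
  destruct (Rlt_dec th2 (y2 i)); [|discriminate]. intros _.
  destruct (Rlt_dec th1 (y1 i)); auto. exfalso; apply n0, H; auto; lia.
Qed.

Lemma cnt_lt n y1 th1 y2 th2 a :
  (forall i, (i < n)%nat -> th2 < y2 i -> th1 < y1 i) -> (a < n)%nat ->
  th1 < y1 a -> ~ th2 < y2 a -> (cnt n y2 th2 < cnt n y1 th1)%nat.
Proof.
  intros H Ha H1 H2. apply filter_len_lt with a.
  - intros i Hi. apply in_seq in Hi.
    destruct (Rlt_dec th2 (y2 i)); [|discriminate]. intros _.
    destruct (Rlt_dec th1 (y1 i)); auto. exfalso; apply n0, H; auto; lia.
  - apply in_seq; lia.
  - destruct (Rlt_dec th1 (y1 a)); tauto.
  - destruct (Rlt_dec th2 (y2 a)); tauto.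
Qed.

Lemma cnt_zero n y th : (cnt n y th <= 0)%nat -> forall i, (i < n)%nat -> ~ th < y i.
Proof.
  intros H i Hi Hlt.
  assert (cnt n (fun _ : nat => 0%R) 1%R < cnt n y th)%nat.
  { apply cnt_lt with i; auto. intros j _ Hj; lra. lra. }
  lia.
Qed.

Lemma cnt_lt_n n y th i : (i < n)%nat -> ~ th < y i -> (cnt n y th < n)%nat.
Proof.
  intros Hi H.
  assert (cnt n y th < cnt n (fun _ : nat => 1%R) 0%R)%nat.
  { apply cnt_lt with i; auto. intros; lra. lra. }
  pose proof (cnt_le_n n (fun _ : nat => 1%R) 0%R). lia.
Qed.

Lemma least_nat (P : nat -> Prop) : (exists t, P t) -> exists t, P t /\ forall t', (t' < t)%nat -> ~ P t'.
Proof.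
  intros [t Ht]. induction t as [t IH] using (well_founded_induction Wf_nat.lt_wf).
  destruct (classic (exists t', (t' < t)%nat /\ P t')) as [[t' [H1 H2]]|H].
  - apply (IH t' H1 H2).
  - exists t; split; auto. intros t' H1 H2; apply H; eauto.
Qed.

Lemma crt_cross (Rl : nat -> nat -> Prop) (P : nat -> Prop) x y :
  clos_refl_trans nat Rl x y -> P x -> ~ P y -> exists a b, Rl a b /\ P a /\ ~ P b.
Proof.
  induction 1 as [x y H|x|x y z H1 IH1 H2 IH2]; intros Px Py.
  - exists x, y; auto.
  - contradiction.
  - destruct (classic (P y)); [apply IH2|apply IH1]; auto.
Qed.

Lemma pigeon (f : nat -> nat) n : (forall j, (f (S j) <= f j)%nat) -> (f 0 < n)%nat ->
  exists j, (j < n)%nat /\ f (S j) = f j.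
Proof.
  intros Hm H0. apply NNPP; intros Hn.
  assert (forall j, (j <= n)%nat -> (f j + j <= f 0)%nat).
  { induction j; intros Hj; [lia|].
    assert (f (S j) <> f j) by (intros E; apply Hn; exists j; split; [lia|auto]).
    specialize (Hm j). specialize (IHj ltac:(lia)). lia. }
  specialize (H n (le_n n)). lia.
Qed.
Lemma ub_step n E eta alpha k0 x0 t B : in_A_ave eta alpha ->
  (forall i, (i<n)%nat -> traj n E eta alpha k0 x0 t i <= B) ->
  forall i, (i<n)%nat -> traj n E eta alpha k0 x0 (S t) i <= B.
Proof.
  intros Hp H i Hi. cbn [traj]. destruct (Hp (k0+t)%nat).
  eapply Rle_trans; [apply step_le_max; tauto|].
  destruct (nmax_spec n E (k0+t)%nat i (traj n E eta alpha k0 x0 t)) as [_ [_ [H3|[j [Hj [Ej H3]]]]]];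
    rewrite H3; auto.
Qed.

Lemma lb_step n E eta alpha k0 x0 t B : in_A_ave eta alpha ->
  (forall i, (i<n)%nat -> B <= traj n E eta alpha k0 x0 t i) ->
  forall i, (i<n)%nat -> B <= traj n E eta alpha k0 x0 (S t) i.
Proof.
  intros Hp H i Hi. cbn [traj]. destruct (Hp (k0+t)%nat).
  eapply Rle_trans; [|apply step_ge_min; tauto].
  destruct (nmin_spec n E (k0+t)%nat i (traj n E eta alpha k0 x0 t)) as [_ [_ [H3|[j [Hj [Ej H3]]]]]];
    rewrite H3; auto.
Qed.

Lemma ub_fwd n E eta alpha k0 x0 t B : in_A_ave eta alpha ->
  (forall i, (i<n)%nat -> traj n E eta alpha k0 x0 t i <= B) ->
  forall d i, (i<n)%nat -> traj n E eta alpha k0 x0 (t + d) i <= B.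
Proof.
  intros Hp H d. induction d as [|d IH].
  - rewrite Nat.add_0_r; auto.
  - rewrite Nat.add_succ_r. apply ub_step; auto.
Qed.

Lemma lb_fwd n E eta alpha k0 x0 t B : in_A_ave eta alpha ->
  (forall i, (i<n)%nat -> B <= traj n E eta alpha k0 x0 t i) ->
  forall d i, (i<n)%nat -> B <= traj n E eta alpha k0 x0 (t + d) i.
Proof.
  intros Hp H d. induction d as [|d IH].
  - rewrite Nat.add_0_r; auto.
  - rewrite Nat.add_succ_r. apply lb_step; auto.
Qed.

Lemma inv_noncross n E eta alpha k0 x0 (A : nat -> Prop) M w g t :
  bidirectional_seq n E -> in_A_ave eta alpha ->
  (forall i, (i<n)%nat -> traj n E eta alpha k0 x0 t i <= M /\
     (A i -> M - w < traj n E eta alpha k0 x0 t i) /\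
     (~ A i -> traj n E eta alpha k0 x0 t i <= M - w - g)) ->
  (forall a b, (a<n)%nat -> (b<n)%nat -> A a -> ~ A b -> E (k0+t)%nat a b = false) ->
  (forall i, (i<n)%nat -> traj n E eta alpha k0 x0 (S t) i <= M /\
     (A i -> M - w < traj n E eta alpha k0 x0 (S t) i) /\
     (~ A i -> traj n E eta alpha k0 x0 (S t) i <= M - w - g)).
Proof.
  intros Hbi Hp H Hnc i Hi. cbn [traj]. destruct (Hp (k0+t)%nat) as [[Hp1 _] Hp2].
  set (y := traj n E eta alpha k0 x0 t) in *.
  pose proof (step_le_max n E eta alpha (k0+t)%nat y i Hp1 Hp2) as Smx.
  pose proof (step_ge_min n E eta alpha (k0+t)%nat y i Hp1 Hp2) as Smn.
  destruct (nmax_spec n E (k0+t)%nat i y) as [_ [_ Mx]].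
  destruct (nmin_spec n E (k0+t)%nat i y) as [_ [_ Mn]].
  split; [|split].
  - eapply Rle_trans; [exact Smx|].
    destruct Mx as [H3|[j [Hj [Ej H3]]]]; rewrite H3; apply H; auto.
  - intros Ai. eapply Rlt_le_trans; [|exact Smn].
    destruct Mn as [H3|[j [Hj [Ej H3]]]]; rewrite H3; [apply H; auto|].
    destruct (classic (A j)) as [Aj|Aj]; [apply H; auto|].
    rewrite Hbi in Ej by auto. rewrite (Hnc i j Hi Hj Ai Aj) in Ej; discriminate.
  - intros Ai. eapply Rle_trans; [exact Smx|].
    destruct Mx as [H3|[j [Hj [Ej H3]]]]; rewrite H3; [apply H; auto|].
    destruct (classic (A j)) as [Aj|Aj]; [|apply H; auto].
    rewrite (Hnc j i Hj Hi Aj Ai) in Ej; discriminate.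
Qed.

Lemma cross_step n E eta alpha a k0 x0 (A : nat -> Prop) M w g s :
  in_A_ave eta alpha -> 0 < a < 1 -> (forall k, alpha k >= a) ->
  (forall i, (i<n)%nat -> traj n E eta alpha k0 x0 s i <= M /\
     (A i -> M - w < traj n E eta alpha k0 x0 s i) /\
     (~ A i -> traj n E eta alpha k0 x0 s i <= M - w - g)) ->
  forall i, (i<n)%nat -> traj n E eta alpha k0 x0 (S s) i <= M /\
     (A i -> (forall j, (j<n)%nat -> E (k0+s)%nat j i = true -> A j) ->
        M - w < traj n E eta alpha k0 x0 (S s) i) /\
     (~ (A i /\ forall j, (j<n)%nat -> E (k0+s)%nat j i = true -> A j) ->
        traj n E eta alpha k0 x0 (S s) i <= M - w - (a * (w + g) - w)).
Proof.
  intros Hp Ha0 Ha H i Hi. cbn [traj]. destruct (Hp (k0+s)%nat) as [[Hp1 _] Hp2].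
  set (y := traj n E eta alpha k0 x0 s) in *.
  pose proof (step_le_max n E eta alpha (k0+s)%nat y i Hp1 Hp2) as Smx.
  pose proof (step_ge_min n E eta alpha (k0+s)%nat y i Hp1 Hp2) as Smn.
  pose proof (step_le_mix n E eta alpha a (k0+s)%nat y i Hp1 Hp2 (Ha _)) as Smix.
  destruct (nmax_spec n E (k0+s)%nat i y) as [_ [_ Mx]].
  destruct (nmin_spec n E (k0+s)%nat i y) as [Mn1 [Mn2 Mn]].
  assert (HmxM : nbr_max n E (k0+s)%nat i y <= M).
  { destruct Mx as [H3|[j [Hj [Ej H3]]]]; rewrite H3; apply H; auto. }
  split; [|split].
  - lra.
  - intros Ai Hall. eapply Rlt_le_trans; [|exact Smn].
    destruct Mn as [H3|[j [Hj [Ej H3]]]]; rewrite H3; apply H; auto.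
  - intros Hn.
    assert (Hmn : nbr_min n E (k0+s)%nat i y <= M - w - g).
    { destruct (classic (A i)) as [Ai|Ai].
      - destruct (classic (exists j, (j<n)%nat /\ E (k0+s)%nat j i = true /\ ~ A j)) as [[j [Hj [Ej Aj]]]|Hno].
        + eapply Rle_trans; [apply Mn2; eauto|]. apply H; auto.
        + exfalso. apply Hn; split; auto. intros j Hj Ej. apply NNPP; intros Aj. apply Hno; eauto.
      - eapply Rle_trans; [exact Mn1|]. apply H; auto. }
    assert ((1 - a) * nbr_max n E (k0+s)%nat i y <= (1 - a) * M) by (apply Rmult_le_compat_l; lra).
    assert (a * nbr_min n E (k0+s)%nat i y <= a * (M - w - g)) by (apply Rmult_le_compat_l; lra).
    nra.
Qed.
Lemma drop n E eta alpha a k0 x0 M w :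
  bidirectional_seq n E -> inf_jointly_connected n E -> in_A_ave eta alpha ->
  0 < a < 1 -> (forall k, alpha k >= a) -> 0 <= w ->
  forall r u g, a ^ r * g > (INR r + 1) * w ->
  (forall i, (i<n)%nat -> traj n E eta alpha k0 x0 u i <= M /\
      (M - w < traj n E eta alpha k0 x0 u i \/ traj n E eta alpha k0 x0 u i <= M - w - g)) ->
  (cnt n (traj n E eta alpha k0 x0 u) (M - w) <= r)%nat ->
  (exists j, (j<n)%nat /\ traj n E eta alpha k0 x0 u j <= M - w) ->
  exists K, (u <= K)%nat /\ forall i, (i<n)%nat ->
    traj n E eta alpha k0 x0 K i <= M - (a ^ r * g - (INR r + 1) * w).
Proof.
  intros Hbi Hcon Hp Ha0 Ha Hw r.
  set (X := traj n E eta alpha k0 x0).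
  induction r as [|r IH]; intros u g Hg Hinv Hc Hj.
  - exists u; split; [lia|]. intros i Hi.
    pose proof (cnt_zero _ _ _ Hc i Hi) as Hz.
    destruct (Hinv i Hi) as [_ [H|H]]; [contradiction|]. simpl in *. lra.
  - simpl pow in *. rewrite S_INR in *.
    assert (Hp0 : 0 < a ^ r) by (apply pow_lt; lra).
    assert (Hp1 : a ^ r <= 1) by (apply pow_le_1; lra).
    set (p := a ^ r) in *.
    assert (HI := pos_INR r).
    assert (Hgpos : 0 < g).
    { destruct (Rle_dec g 0) as [Hle|Hle]; [|lra].
      assert (0 < a * p) by (apply Rmult_lt_0_compat; lra).
      assert (a * p * g <= 0) by nra. nra. }
    assert (Hrw : INR r * w >= 0) by (apply Rle_ge, Rmult_le_pos; lra).
    assert (Hapg : a * p * g <= g).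
    { assert (a * p <= 1) by nra. nra. }
    destruct (classic (exists i0, (i0 < n)%nat /\ M - w < X u i0)) as [[i0 [Hi0 Ai0]]|Hno].
    2:{ exists u; split; [lia|]. intros i Hi.
        destruct (Hinv i Hi) as [_ [H|H]]; [exfalso; apply Hno; eauto|]. lra. }
    destruct Hj as [j0 [Hj0 Aj0]].
    set (A := fun i => M - w < X u i).
    set (P := fun t => (u <= t)%nat /\ exists a1 b1, (a1<n)%nat /\ (b1<n)%nat /\ A a1 /\ ~ A b1 /\ E (k0 + t)%nat a1 b1 = true).
    assert (HP : exists t, P t).
    { destruct (crt_cross _ A i0 j0 (Hcon (k0 + u)%nat i0 j0 Hi0 Hj0) Ai0 ltac:(unfold A; lra))
        as [a1 [b1 [[Ha1 [Hb1 [s' [Hs' Es']]]] [Aa1 Ab1]]]].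
      exists (s' - k0)%nat. split; [lia|]. exists a1, b1.
      replace (k0 + (s' - k0))%nat with s' by lia. auto. }
    destruct (least_nat P HP) as [s [[Hus [a1 [b1 [Ha1 [Hb1 [Aa1 [Ab1 Eab]]]]]]] Hmin]].
    assert (HinvA : forall d, (u + d <= s)%nat -> forall i, (i<n)%nat -> X (u + d)%nat i <= M /\ (A i -> M - w < X (u + d)%nat i) /\ (~ A i -> X (u + d)%nat i <= M - w - g)).
    { induction d as [|d IHd]; intros Hd i Hi.
      - rewrite Nat.add_0_r. destruct (Hinv i Hi) as [H1 [H2|H2]]; unfold A; repeat split; auto; intros; lra.
      - rewrite Nat.add_succ_r. apply inv_noncross; auto.
        + apply IHd; lia.
        + intros a2 b2 Ha2 Hb2 Aa2 Ab2. destruct (E (k0 + (u + d))%nat a2 b2) eqn:Ee; auto.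
          exfalso. apply (Hmin (u + d)%nat); [lia|]. split; [lia|]. exists a2, b2; auto. }
    assert (Hs := HinvA (s - u)%nat ltac:(lia)). replace (u + (s - u))%nat with s in Hs by lia.
    pose proof (cross_step n E eta alpha a k0 x0 A M w g s Hp Ha0 Ha Hs) as Hcs.
    set (g' := a * (w + g) - w) in *.
    assert (Hg'1 : p * g' >= a * p * g - w).
    { assert (p * (a * w) >= 0) by (apply Rle_ge, Rmult_le_pos; nra).
      assert (p * w <= w) by nra. unfold g'. nra. }
    assert (Hg'0 : 0 < g').
    { assert (a * g >= a * p * g) by nra. assert (a * w <= w) by nra. unfold g'. nra. }
    destruct (IH (S s) g') as [K [HK1 HK2]].
    + lra.
    + intros i Hi. destruct (Hcs i Hi) as [H1 [H2 H3]]. split; auto.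
      destruct (classic (A i /\ forall j, (j<n)%nat -> E (k0+s)%nat j i = true -> A j)) as [[Ai Hall]|Hn].
      * left; auto.
      * right; auto.
    + assert (cnt n (X (S s)) (M - w) < cnt n (X u) (M - w))%nat.
      { apply cnt_lt with a1; auto.
        - intros i Hi Hlt. apply NNPP; intros Ai.
          destruct (Hcs i Hi) as [_ [_ H3]]. assert (X (S s) i <= M - w - g') by (apply H3; tauto). lra.
        - destruct (Hcs a1 Ha1) as [_ [_ H3]]. intros Hlt.
          assert (X (S s) a1 <= M - w - g'); [|lra]. apply H3. intros [_ Hall]. apply Ab1, Hall; auto.
          rewrite Hbi; auto. }
      lia.
    + exists a1; split; auto.
      destruct (Hcs a1 Ha1) as [_ [_ H3]].
      assert (X (S s) a1 <= M - w - g'); [|lra]. apply H3. intros [_ Hall]. apply Ab1, Hall; auto.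
      rewrite Hbi; auto.
    + exists K; split; [lia|]. intros i Hi. specialize (HK2 i Hi). lra.
Qed.
Lemma contract n E eta alpha a k0 x0 :
  (1 <= n)%nat -> bidirectional_seq n E -> inf_jointly_connected n E -> in_A_ave eta alpha ->
  0 < a < 1 -> (forall k, alpha k >= a) ->
  exists c, 0 < c < 1 /\ forall u, exists K, (u <= K)%nat /\
    gmax n (traj n E eta alpha k0 x0 K) - gmin n (traj n E eta alpha k0 x0 K) <=
    (1 - c) * (gmax n (traj n E eta alpha k0 x0 u) - gmin n (traj n E eta alpha k0 x0 u)).
Proof.
  intros Hn Hbi Hcon Hp Ha0 Ha.
  set (X := traj n E eta alpha k0 x0).
  assert (HA : 0 < a ^ n) by (apply pow_lt; lra).
  assert (HAle : a ^ n <= 1) by (apply pow_le_1; lra).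
  set (Aa := a ^ n) in *.
  assert (HN := pos_INR n).
  set (rho := Aa / (Aa + INR n + 2)).
  assert (Hrho : rho * (Aa + INR n + 2) = Aa) by (unfold rho; field; lra).
  assert (Hrho0 : 0 < rho) by (unfold rho; apply Rdiv_lt_0_compat; lra).
  assert (Hrho1 : rho < 1) by nra.
  exists (rho ^ n). split.
  { split; [apply pow_lt; lra|]. pose proof (pow_anti rho 1 n ltac:(lra) Hn). simpl in H. lra. }
  intros u.
  set (M := gmax n (X u)). set (lo := gmin n (X u)).
  assert (HloM : lo <= M).
  { apply Rle_trans with (X u 0%nat); [apply gmin_lb|apply gmax_ub]; lia. }
  set (D := M - lo).
  destruct (Rle_dec D 0) as [HD|HD].
  { exists u; split; [lia|]. fold M lo. fold D.
    assert (HD0 : M - lo = 0) by (unfold D in HD; lra). unfold D; rewrite HD0; lra. }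
  apply Rnot_le_lt in HD.
  set (V := fun j => D * rho ^ j).
  set (f := fun j => cnt n (X u) (M - V j)).
  destruct (gmin_att n (X u) ltac:(lia)) as [imin [Himin Himin']]. fold lo in Himin'.
  assert (HVS : forall j, V (S j) <= V j).
  { intros j. unfold V. simpl. assert (0 < rho ^ j) by (apply pow_lt; lra).
    apply Rmult_le_compat_l; [lra|].
    apply Rle_trans with (1 * rho ^ j); [apply Rmult_le_compat_r; lra|lra]. }
  assert (HVD : forall j, V j <= D).
  { intros j. unfold V. pose proof (pow_le_1 rho j ltac:(lra)).
    apply Rle_trans with (D * 1); [apply Rmult_le_compat_l; lra| lra]. }
  assert (Hf0 : (f 0 < n)%nat).
  { unfold f. apply cnt_lt_n with imin; auto. unfold V, D; simpl. rewrite Himin'. lra. }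
  assert (Hfm : forall j, (f (S j) <= f j)%nat).
  { intros j. unfold f. apply cnt_mono. intros i Hi Hlt. specialize (HVS j). lra. }
  destruct (pigeon f n Hfm Hf0) as [j [Hj Hfj]].
  assert (Heq : forall i, (i < n)%nat -> M - V j < X u i -> M - V (S j) < X u i).
  { intros i Hi Hlt. apply NNPP; intros Hn'.
    assert (f (S j) < f j)%nat; [|lia].
    unfold f. apply cnt_lt with i; auto. intros i' _ H'. specialize (HVS j). lra. }
  set (q := rho ^ j).
  assert (Hq : 0 < q) by (apply pow_lt; lra).
  assert (HVSj : V (S j) = D * (rho * q)) by reflexivity.
  assert (HVj : V j = D * q) by reflexivity.
  set (w := V (S j)). set (g := V j - V (S j)).
  assert (Hkey : Aa * g - (INR n + 1) * w = D * q * rho).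
  { unfold g, w. rewrite HVSj, HVj.
    replace (Aa * (D * q - D * (rho * q)) - (INR n + 1) * (D * (rho * q)))
      with (D * q * (Aa - (rho * (Aa + INR n + 2) - rho))) by ring.
    rewrite Hrho. ring. }
  assert (Hw : 0 <= w) by (unfold w; rewrite HVSj; assert (0 < rho*q) by nra; nra).
  assert (HDqr : 0 < D * q * rho) by (apply Rmult_lt_0_compat; [apply Rmult_lt_0_compat|]; lra).
  destruct (drop n E eta alpha a k0 x0 M w Hbi Hcon Hp Ha0 Ha Hw n u g) as [K [HK1 HK2]]; fold X; try fold X in HK2.
  - fold Aa. lra.
  - intros i Hi. split; [apply gmax_ub; auto|].
    destruct (Rlt_dec (M - V j) (X u i)) as [Hl|Hl].
    + left. apply Heq; auto.
    + right. unfold g, w. apply Rnot_lt_le in Hl. lra.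
  - apply cnt_le_n.
  - exists imin; split; auto. rewrite Himin'. unfold w. specialize (HVD (S j)). unfold D in *. lra.
  - exists K; split; auto.
    fold Aa in HK2. rewrite Hkey in HK2.
    assert (HKle : gmax n (X K) <= M - D * q * rho) by (apply gmax_le; [lia|auto]).
    assert (HKlo : lo <= gmin n (X K)).
    { apply gmin_ge; [lia|]. intros i Hi.
      replace K with (u + (K - u))%nat by lia. apply lb_fwd; auto.
      intros i' Hi'. apply gmin_lb; auto. }
    assert (Hpow : rho ^ n <= q * rho).
    { replace (q * rho) with (rho ^ (S j)) by (simpl; unfold q; ring).
      apply pow_anti; [lra|lia]. }
    fold M lo. fold D.
    assert (D * rho ^ n <= D * (q * rho)) by (apply Rmult_le_compat_l; lra).
    assert (HDdef : D = M - lo) by reflexivity.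
    assert (HDr : D * (q * rho) = D * q * rho) by ring.
    assert (HDc : (1 - rho ^ n) * D = D - D * rho ^ n) by ring.
    rewrite HDc. lra.
Qed.
Lemma case1 n E eta alpha a :
  (1 <= n)%nat -> bidirectional_seq n E -> inf_jointly_connected n E -> in_A_ave eta alpha ->
  0 < a < 1 -> (forall k, alpha k >= a) -> global_consensus n E eta alpha.
Proof.
  intros Hn Hbi Hcon Hp Ha0 Ha k0 x0.
  set (X := traj n E eta alpha k0 x0).
  set (hi := fun t => gmax n (X t)). set (lo := fun t => gmin n (X t)).
  assert (Hb : forall t i, (i < n)%nat -> lo t <= X t i <= hi t).
  { intros t i Hi; split; [apply gmin_lb|apply gmax_ub]; auto. }
  assert (Hhi : forall t, hi (S t) <= hi t).
  { intros t. apply gmax_le; [lia|]. apply ub_step; auto. intros i Hi; apply Hb; auto. }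
  assert (Hlo : forall t, lo t <= lo (S t)).
  { intros t. apply gmin_ge; [lia|]. apply lb_step; auto. intros i Hi; apply Hb; auto. }
  assert (Hhi0 : forall t, hi t <= hi 0%nat).
  { induction t; [lra|]. specialize (Hhi t); lra. }
  assert (Hlohi : forall t, lo t <= hi t).
  { intros t. destruct (Hb t 0%nat ltac:(lia)); lra. }
  destruct (growing_cv lo Hlo) as [z Hz].
  { exists (hi 0%nat). intros r [i ->]. specialize (Hlohi i); specialize (Hhi0 i); lra. }
  exists z. intros i Hi eps Heps.
  set (d := fun t => hi t - lo t).
  assert (Hd : forall t s, d (t + s)%nat <= d t).
  { intros t s. induction s as [|s IH]; [rewrite Nat.add_0_r; lra|].
    rewrite Nat.add_succ_r. unfold d in *. specialize (Hhi (t+s)%nat); specialize (Hlo (t+s)%nat). lra. }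
  destruct (contract n E eta alpha a k0 x0 Hn Hbi Hcon Hp Ha0 Ha) as [c [Hc Hcon2]].
  fold X in Hcon2.
  assert (Hit : forall m, exists K, d K <= (1 - c) ^ m * d 0%nat).
  { induction m as [|m [K HK]].
    - exists 0%nat. simpl. lra.
    - destruct (Hcon2 K) as [K' [_ HK']]. exists K'. simpl.
      unfold d in *. fold (hi K') (lo K') (hi K) (lo K) in HK'.
      assert ((1 - c) * (hi K - lo K) <= (1 - c) * ((1 - c) ^ m * (hi 0%nat - lo 0%nat)))
        by (apply Rmult_le_compat_l; lra). lra. }
  assert (Hd0 : 0 <= d 0%nat) by (unfold d; pose proof (Hlohi 0%nat); lra).
  destruct (pow_lt_1_zero (1 - c) ltac:(rewrite Rabs_right; lra) (eps / 2 / (d 0%nat + 1)))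
    as [m Hm].
  { apply Rdiv_lt_0_compat; lra. }
  specialize (Hm m (le_n m)). rewrite Rabs_right in Hm by (apply Rle_ge, pow_le; lra).
  destruct (Hit m) as [K HK].
  assert (HdK : d K < eps / 2).
  { assert ((1 - c) ^ m * d 0%nat <= (1 - c) ^ m * (d 0%nat + 1)).
    { apply Rmult_le_compat_l; [apply pow_le; lra|lra]. }
    assert ((1 - c) ^ m * (d 0%nat + 1) < eps / 2).
    { apply Rmult_lt_reg_r with (/ (d 0%nat + 1)); [apply Rinv_0_lt_compat; lra|].
      rewrite Rmult_assoc, Rinv_r by lra. unfold Rdiv in Hm. lra. }
    lra. }
  destruct (Hz (eps / 2) ltac:(lra)) as [N1 HN1].
  exists (Nat.max N1 K). intros t Ht.
  specialize (HN1 t ltac:(lia)). unfold Rdist in *. apply Rabs_def2 in HN1.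
  assert (Hdt : d t <= d K).
  { replace t with (K + (t - K))%nat by lia. apply Hd. }
  destruct (Hb t i Hi). unfold d in Hdt, HdK.
  apply Rabs_def1; fold X; lra.
Qed.

Lemma nmin_opp n E k i x y : (forall j, y j = - x j) ->
  nbr_min n E k i y = - nbr_max n E k i x.
Proof.
  intros Hy. unfold nbr_min, nbr_max. generalize (nbrs n E k i). intros l.
  induction l as [|h t IH]; simpl; [apply Hy|].
  rewrite IH, Hy. unfold Rmin, Rmax.
  destruct (Rle_dec (- x h) _), (Rle_dec (x h) _); lra.
Qed.

Lemma nmax_opp n E k i x y : (forall j, y j = - x j) ->
  nbr_max n E k i y = - nbr_min n E k i x.
Proof.
  intros Hy. unfold nbr_min, nbr_max. generalize (nbrs n E k i). intros l.
  induction l as [|h t IH]; simpl; [apply Hy|].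
  rewrite IH, Hy. unfold Rmin, Rmax.
  destruct (Rle_dec (- x h) _), (Rle_dec (x h) _); lra.
Qed.

Lemma traj_opp n E eta alpha k0 x0 t i :
  traj n E eta (fun k => 1 - eta k - alpha k) k0 (fun j => - x0 j) t i =
  - traj n E eta alpha k0 x0 t i.
Proof.
  revert i. induction t as [|t IH]; intros i; cbn [traj]; [reflexivity|].
  unfold step. rewrite (nmin_opp _ _ _ _ _ _ IH), (nmax_opp _ _ _ _ _ _ IH), IH. ring.
Qed.

Theorem theorem6 (n : nat) (E : nat -> nat -> nat -> bool) (eta alpha : nat -> R)
  (astar : R) :
  (3 <= n)%nat ->
  bidirectional_seq n E ->
  inf_jointly_connected n E ->
  in_A_ave eta alpha ->
  0 < astar < 1 ->
  ((forall k, alpha k >= astar) \/ (forall k, 1 - alpha k - eta k >= astar)) ->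
  global_consensus n E eta alpha.
Proof.
  intros Hn Hbi Hcon Hp Ha [Hal|Hbe].
  - apply case1 with astar; auto; lia.
  - assert (Hc : global_consensus n E eta (fun k => 1 - eta k - alpha k)).
    { apply case1 with astar; auto; [lia| |].
      - intros k. destruct (Hp k). split; [auto|lra].
      - intros k. specialize (Hbe k). lra. }
    intros k0 x0. destruct (Hc k0 (fun j => - x0 j)) as [z Hz].
    exists (- z). intros i Hi eps Heps. destruct (Hz i Hi eps Heps) as [N HN].
    exists N. intros m Hm. specialize (HN m Hm). rewrite traj_opp in HN.
    unfold Rdist in *. replace (traj n E eta alpha k0 x0 m i - - z)
      with (- (- traj n E eta alpha k0 x0 m i - z)) by ring.
    rewrite Rabs_Ropp. auto.
Qed.
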